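(* Let $\Gamma$ be a finite connected $4$-valent graph of girth at least $5$ and let $g$ be an automorphism of $\Gamma$. Then $$2|F(\Gamma,g)|+4|V_1(\Gamma,g)|+3|V_2(\Gamma,g)|+|V_4(\Gamma,g)|\le|V\Gamma|.$$
   Context: For an automorphism $g$ of a $4$-valent graph $\Gamma$: $A(\Gamma,g)$ is the set of edges $\{a,b\}$ with $a^g=a$ and $b^g=b$; $F(\Gamma,g)$ is the set of edges $\{a,b\}$ with $a^g=b$ and $b^g=a$, $a\neq b$. $\Gamma[g]$ is the subgraph with edge set $A(\Gamma,g)$ and vertex set the vertices incident to edges of $A(\Gamma,g)$; its vertices have valency $1$, $2$ or $4$ in $\Gamma[g]$, and $V_i(\Gamma,g)$ is the set of vertices of $\Gamma[g]$ of valency $i$ in $\Gamma[g]$, for $i\in\{1,2,4\}$. *)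

(* Defs.v *)
From mathcomp Require Import all_boot perm.
Set Implicit Arguments. Unset Strict Implicit. Unset Printing Implicit Defensive.

Section Graphs.
Variable T : finType.

Definition simple_graph (e : rel T) : Prop := symmetric e /\ irreflexive e.

Definition regular (e : rel T) (k : nat) : Prop :=
  forall v : T, #|[set w | e v w]| = k.

Definition connected (e : rel T) : Prop := forall x y : T, connect e x y.

Definition girth_ge (e : rel T) (n : nat) : Prop :=
  forall c : seq T, path.cycle e c -> uniq c -> 3 <= size c -> n <= size c.

Definition is_graph_aut (e : rel T) (g : {perm T}) : Prop :=
  forall x y : T, e (g x) (g y) = e x y.

Definition edges (e : rel T) : {set {set T}} :=
  [set [set a; b] | a in T, b in T & e a b].

Definition A_edges (e : rel T) (g : {perm T}) : {set {set T}} :=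
  [set [set a; b] | a in T, b in T & [&& e a b, g a == a & g b == b]].

Definition F_edges (e : rel T) (g : {perm T}) : {set {set T}} :=
  [set [set a; b] | a in T, b in T & [&& e a b, a != b, g a == b & g b == a]].

Definition val_in_fix (e : rel T) (g : {perm T}) (v : T) : nat :=
  #|[set x in A_edges e g | v \in x]|.

(* V_i(Γ,g): vertices of Γ[g] (i.e. incident to an edge of A(Γ,g))
   of valency i in Γ[g]; for i >= 1 being of valency i implies being a vertex of Γ[g] *)
Definition V_i (e : rel T) (g : {perm T}) (i : nat) : {set T} :=
  [set v | (0 < val_in_fix e g v) && (val_in_fix e g v == i)].

End Graphs.

(* Main.v *)
Require Import Defs.
From mathcomp Require Import all_boot perm.
From mathcomp Require Import zify.
Set Implicit Arguments. Unset Strict Implicit. Unset Printing Implicit Defensive.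

Lemma card_cond (I : finType) (A : {set I}) (Q : pred I) :
  #|[set i in A | Q i]| = \sum_(i in A) (Q i : nat).
Proof.
rewrite -sum1_card.
have E : [set i in A | Q i] =i [pred i | (i \in A) && Q i] by move=> i; rewrite !inE.
rewrite (eq_bigl _ _ E) big_mkcondr; apply: eq_bigr => i _; by case: (Q i).
Qed.
Lemma dcount (I J : finType) (A : {set I}) (P : I -> J -> bool) :
  \sum_(j : J) #|[set i in A | P i j]| = \sum_(i in A) #|[set j | P i j]|.
Proof.
under eq_bigr => j _ do rewrite card_cond.
rewrite exchange_big; apply: eq_bigr => i _.
have -> : [set j | P i j] = [set j in setT | P i j] by apply/setP => j; rewrite !inE.
rewrite card_cond; apply: eq_bigl => j; by rewrite inE.
Qed.
Lemma sum_mem (I : finType) (A : {set I}) : \sum_(i : I) (i \in A : nat) = #|A|.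
Proof.
rewrite -sum1_card [RHS]big_mkcond; apply: eq_bigr => i _; by case: (i \in A).
Qed.

Section Pf.
Variable T : finType.
Variables (e : rel T) (g : {perm T}).
Hypothesis sg : simple_graph e.
Hypothesis aut : is_graph_aut e g.
Hypothesis gir : girth_ge e 5.
Hypothesis reg : regular e 4.

Lemma esym' x y : e x y = e y x. Proof. by case: sg => s _; apply: s. Qed.
Lemma eirr x : e x x = false. Proof. by case: sg => _ i; apply: i. Qed.

Lemma V_fix i v : v \in V_i e g i -> g v == v.
Proof.
rewrite inE => /andP[/card_gt0P[x] + _]; rewrite inE => /andP[/imset2P[a b _]].
rewrite inE => /andP[_ /and3P[_ ga gb]] -> ; rewrite !inE => /orP[]/eqP->//.
Qed.

Lemma fixnb_le v : g v == v -> #|[set w | e v w & g w == w]| <= val_in_fix e g v.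
Proof.
move=> gv.
rewrite -(@card_in_imset _ _ (fun w => [set v; w])).
  apply: subset_leq_card; apply/subsetP => x /imsetP[w]; rewrite inE => /andP[vw gw] ->.
  rewrite inE set21 andbT; apply/imset2P; exists v w => //.
  by rewrite inE vw gv gw.
move=> w1 w2; rewrite !inE => /andP[vw1 _] /andP[vw2 _] /setP/(_ w1).
rewrite !inE eqxx orbT => /esym/orP[/eqP w1v|/eqP->//].
by rewrite w1v eirr in vw1.
Qed.

Lemma nonfix_ge i v : v \in V_i e g i -> 4 <= #|[set w | e v w & g w != w]| + i.
Proof.
move=> vV; have gv := V_fix vV.
have := cardsID [set w | g w == w] [set w | e v w]; rewrite reg.
have -> : [set w | e v w] :&: [set w | g w == w] = [set w | e v w & g w == w].
  by apply/setP => w; rewrite !inE.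
have -> : [set w | e v w] :\: [set w | g w == w] = [set w | e v w & g w != w].
  by apply/setP => w; rewrite !inE andbC.
have := fixnb_le gv; move: vV; rewrite inE => /andP[_ /eqP->]; lia.
Qed.

Lemma fixnb_uniq u : g u != u -> #|[set v | (g v == v) && e v u]| <= 1.
Proof.
move=> gu; apply/card_le1_eqP => v w; rewrite !inE => /andP[/eqP gv vu] /andP[/eqP gw wu].
apply/eqP/negPn/negP => wv.
have vw : v != w by rewrite eq_sym.
have vu' : v != u by apply: contraNneq gu => <-; apply/eqP.
have wu' : w != u by apply: contraNneq gu => <-; apply/eqP.
have vgu : v != g u.
  by apply: contraNneq gu => Hx; apply/eqP; apply: (@perm_inj _ g); rewrite -Hx gv.
have wgu : w != g u.
  by apply: contraNneq gu => Hx; apply/eqP; apply: (@perm_inj _ g); rewrite -Hx gw.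
have e1 : e w (g u) by rewrite -{1}gw aut.
have e2 : e (g u) v by rewrite -gv aut esym'.
have := @gir [:: v; u; w; g u].
rewrite /= vu e1 e2 esym' wu /= !inE.
rewrite (negbTE vu') (negbTE vw) (negbTE vgu) (eq_sym u w) (negbTE wu') (eq_sym u) (negbTE gu) wgu /=.
by move=> /(_ isT isT isT).
Qed.

Lemma tri u v : e u (g u) -> g u != u -> g v == v -> e v u = false.
Proof.
move=> eu gu /eqP gv; apply/negP => vu.
have vu' : v != u by apply: contraNneq gu => <-; apply/eqP.
have vgu : v != g u.
  by apply: contraNneq gu => Hx; apply/eqP; apply: (@perm_inj _ g); rewrite -Hx gv.
have e2 : e (g u) v by rewrite -gv aut esym'.
have := @gir [:: v; u; g u].
rewrite /= vu eu e2 /= !inE (negbTE vu') (negbTE vgu) (eq_sym u) (negbTE gu) /=.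
by move=> /(_ isT isT isT).
Qed.

Lemma F_char u x : x \in F_edges e g -> u \in x ->
  [/\ x = [set u; g u], e u (g u) & g u != u].
Proof.
move=> /imset2P[a b _]; rewrite inE => /andP[_ /and4P[ab anb /eqP ga /eqP gb]] ->.
rewrite !inE => /orP[]/eqP->.
  by rewrite ga ab eq_sym anb.
by rewrite gb setUC esym' ab anb.
Qed.

Lemma F_le1 u : #|[set x in F_edges e g | u \in x]| <= 1.
Proof.
apply/card_le1_eqP => x y; rewrite !inE => /andP[xF ux] /andP[yF uy].
by case: (F_char xF ux) => -> _ _; case: (F_char yF uy) => -> _ _.
Qed.

Lemma F_card x : x \in F_edges e g -> #|[set u | u \in x]| = 2.
Proof.
move=> /imset2P[a b _]; rewrite inE => /andP[_ /and4P[ab anb _ _]] ->.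
have -> : [set u | u \in [set a; b]] = [set a; b] by apply/setP => u; rewrite inE.
by rewrite cards2 anb.
Qed.

End Pf.

Theorem lemma4p3 (T : finType) (e : rel T) (g : {perm T}) :
  simple_graph e -> regular e 4 -> connected e -> girth_ge e 5 ->
  is_graph_aut e g ->
  2 * #|F_edges e g| + 4 * #|V_i e g 1| + 3 * #|V_i e g 2| + #|V_i e g 4|
    <= #|T|.
Proof.
move=> sg reg _ gir aut.
pose c u := (u \in (V_i e g 1) : nat) + (u \in (V_i e g 2) : nat) + (u \in (V_i e g 4) : nat)
  + #|[set v in (V_i e g 1) | e v u && (g u != u)]| + #|[set v in (V_i e g 2) | e v u && (g u != u)]|
  + #|[set x in F_edges e g | u \in x]|.
have cle u : c u <= 1.
  rewrite /c; case/orP: (orbN (g u == u)) => gu.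
  - have -> : [set v in (V_i e g 1) | e v u && (g u != u)] = set0
      by apply/setP => v; rewrite !inE gu !andbF.
    have -> : [set v in (V_i e g 2) | e v u && (g u != u)] = set0
      by apply/setP => v; rewrite !inE gu !andbF.
    have -> : #|[set x in F_edges e g | u \in x]| = 0.
      apply/eqP; rewrite cards_eq0; apply/eqP/setP => x; rewrite !inE.
      apply/negP => /andP[xF ux]; case: (F_char sg xF ux) => _ _; by rewrite gu.
    rewrite !cards0 !inE.
    by case: (val_in_fix e g u) => [|[|[|[|[|k]]]]].
  - have nV i : (u \in V_i e g i) = false.
      by apply/negP => /V_fix; apply/negP.
    rewrite !nV /= add0n.
    have b12 : #|[set v in (V_i e g 1) | e v u && (g u != u)]| + #|[set v in (V_i e g 2) | e v u && (g u != u)]|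
       <= #|[set v | (g v == v) && e v u]|.
      rewrite -cardsUI.
      have -> : [set v in (V_i e g 1) | e v u && (g u != u)] :&: [set v in (V_i e g 2) | e v u && (g u != u)] = set0.
        apply/setP => v; rewrite !inE.
        by case: (val_in_fix e g v) => [|[|[|k]]]; rewrite ?andbF.
      rewrite cards0 addn0; apply: subset_leq_card; apply/subsetP => v.
      move=> /setUP[]; rewrite in_set => /andP[/V_fix gv /andP[vu _]]; by rewrite inE gv vu.
    have := fixnb_uniq sg aut gir gu.
    case: (posnP #|[set x in F_edges e g | u \in x]|) => [->|Fp]; first by lia.
    move: Fp => /card_gt0P[x]; rewrite inE => /andP[xF ux].
    case: (F_char sg xF ux) => _ eu _.
    have E : [set v | (g v == v) && e v u] = set0.
      apply/setP => v; rewrite !inE; case: (boolP (g v == v)) => //= gv.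
      by rewrite (tri sg aut gir eu gu gv).
    move: b12; rewrite E cards0 => b12 _; have := F_le1 g sg u; move=> H; rewrite add0n; exact: (leq_trans (leq_add b12 H)).
have : \sum_(u : T) c u <= #|T|.
  rewrite -sum1_card; exact: leq_sum.
rewrite /c !big_split /= !sum_mem !(dcount _ (fun v u => e v u && (g u != u))) dcount.
have s1 : 3 * #|(V_i e g 1)| <= \sum_(v in (V_i e g 1)) #|[set j | e v j && (g j != j)]|.
  rewrite mulnC -sum_nat_const; apply: leq_sum => v vV.
  have := nonfix_ge sg reg vV; lia.
have s2 : 2 * #|(V_i e g 2)| <= \sum_(v in (V_i e g 2)) #|[set j | e v j && (g j != j)]|.
  rewrite mulnC -sum_nat_const; apply: leq_sum => v vV.
  have := nonfix_ge sg reg vV; lia.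
have s3 : \sum_(x in F_edges e g) #|[set j | j \in x]| = 2 * #|F_edges e g|.
  rewrite mulnC -sum_nat_const; apply: eq_bigr => x xF; exact: (F_card xF).
move=> H; rewrite s3 in H; apply: leq_trans H. move: s1 s2.
set S1 := \sum_(i in V_i e g 1) _. set S2 := \sum_(i in V_i e g 2) _. clearbody S1 S2; move: #|V_i e g 1| #|V_i e g 2| #|V_i e g 4| #|F_edges e g| S1 S2 => a b d f s t. lia.
Qed.
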